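(* Suppose $0\le\alpha_3\le\alpha_2\le\alpha_1\le\pi/4$, and define $\zeta_0=\cos\alpha_1\cos\alpha_2\cos\alpha_3-\mathrm{i}\sin\alpha_1\sin\alpha_2\sin\alpha_3$, $\zeta_1=\cos\alpha_1\sin\alpha_2\sin\alpha_3-\mathrm{i}\sin\alpha_1\cos\alpha_2\cos\alpha_3$, $\zeta_2=\sin\alpha_1\cos\alpha_2\sin\alpha_3-\mathrm{i}\cos\alpha_1\sin\alpha_2\cos\alpha_3$, $\zeta_3=\sin\alpha_1\sin\alpha_2\cos\alpha_3-\mathrm{i}\cos\alpha_1\cos\alpha_2\sin\alpha_3$. Then $|\zeta_0|\ge|\zeta_1|\ge|\zeta_2|\ge|\zeta_3|\ge0$. The first inequality is an equality iff $\alpha_1=\pi/4$; the second iff $\alpha_2=\alpha_1$; the third iff $\alpha_1=\pi/4$ or $\alpha_3=\alpha_2$; the last iff $\alpha_2=\alpha_3=0$.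
   Context: The numbers $|\zeta_0|,|\zeta_1|,|\zeta_2|,|\zeta_3|$ are the Schmidt coefficients of the two-qubit unitary $U(\alpha_1,\alpha_2,\alpha_3)=\exp[-\mathrm{i}\sum_{k=1}^3\alpha_k\sigma_k\otimes\sigma_k]=\sum_{k=0}^3\zeta_k\sigma_k\otimes\sigma_k$ ($\sigma_0=I$, $\sigma_k$ Pauli matrices), i.e. of its Choi state with respect to the bipartition $AA'|BB'$. *)

(* Defs.v *)
From Stdlib Require Import Reals.
From Coquelicot Require Import Coquelicot.
Open Scope R_scope.

Definition zeta0 (a1 a2 a3 : R) : C :=
  (cos a1 * cos a2 * cos a3, - (sin a1 * sin a2 * sin a3)).
Definition zeta1 (a1 a2 a3 : R) : C :=
  (cos a1 * sin a2 * sin a3, - (sin a1 * cos a2 * cos a3)).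
Definition zeta2 (a1 a2 a3 : R) : C :=
  (sin a1 * cos a2 * sin a3, - (cos a1 * sin a2 * cos a3)).
Definition zeta3 (a1 a2 a3 : R) : C :=
  (sin a1 * sin a2 * cos a3, - (cos a1 * cos a2 * sin a3)).

(* Main.v *)
Require Import Defs.
From Stdlib Require Import Reals Lra Psatz.
From Coquelicot Require Import Coquelicot.
Open Scope R_scope.

Lemma angle_facts x : 0 <= x -> x <= PI/4 ->
  0 <= sin x /\ 0 < cos x /\ sin x <= cos x /\ (sin x = cos x -> x = PI/4).
Proof.
  intros h0 h1. pose proof PI_RGT_0.
  split; [apply sin_ge_0; lra|].
  split; [apply cos_gt_0; lra|].
  rewrite <- sin_shift.
  split; [apply sin_incr_1; lra|].
  intro E. destruct (Rle_lt_or_eq_dec x (PI/4) h1) as [h|h]; [|exact h].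
  exfalso. assert (sin x < sin (PI/2 - x)) by (apply sin_increasing_1; lra). lra.
Qed.

Lemma sin_zero x : 0 <= x -> x <= PI/2 -> sin x = 0 -> x = 0.
Proof.
  intros h0 h1 E. pose proof PI_RGT_0.
  destruct (Rle_lt_or_eq_dec 0 x h0) as [h|h]; [|lra].
  assert (0 < sin x) by (apply sin_gt_0; lra). lra.
Qed.

Lemma sqrt_eq_lemma x y : x = y -> sqrt x = sqrt y.
Proof. intros; subst; reflexivity. Qed.

Theorem lemma8 (a1 a2 a3 : R) :
  0 <= a3 -> a3 <= a2 -> a2 <= a1 -> a1 <= PI / 4 ->
  Cmod (zeta1 a1 a2 a3) <= Cmod (zeta0 a1 a2 a3) /\
  Cmod (zeta2 a1 a2 a3) <= Cmod (zeta1 a1 a2 a3) /\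
  Cmod (zeta3 a1 a2 a3) <= Cmod (zeta2 a1 a2 a3) /\
  0 <= Cmod (zeta3 a1 a2 a3) /\
  (Cmod (zeta0 a1 a2 a3) = Cmod (zeta1 a1 a2 a3) <-> a1 = PI / 4) /\
  (Cmod (zeta1 a1 a2 a3) = Cmod (zeta2 a1 a2 a3) <-> a2 = a1) /\
  (Cmod (zeta2 a1 a2 a3) = Cmod (zeta3 a1 a2 a3) <-> (a1 = PI / 4 \/ a3 = a2)) /\
  (Cmod (zeta3 a1 a2 a3) = 0 <-> (a2 = 0 /\ a3 = 0)).
Proof.
  intros h3 h32 h21 h1. pose proof PI_RGT_0 as HPI.
  destruct (angle_facts a1) as [s1p [c1p [sc1 e1]]]; try lra.
  destruct (angle_facts a2) as [s2p [c2p [sc2 e2]]]; try lra.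
  destruct (angle_facts a3) as [s3p [c3p [sc3 e3]]]; try lra.
  assert (m12 : 0 <= sin (a1 - a2)) by (apply sin_ge_0; lra).
  assert (p12 : 0 <= sin (a1 + a2)) by (apply sin_ge_0; lra).
  assert (m23 : 0 <= sin (a2 - a3)) by (apply sin_ge_0; lra).
  assert (p23 : 0 <= sin (a2 + a3)) by (apply sin_ge_0; lra).
  unfold Cmod, zeta0, zeta1, zeta2, zeta3; simpl fst; simpl snd.
  set (N0 := (cos a1 * cos a2 * cos a3) ^ 2 + (- (sin a1 * sin a2 * sin a3)) ^ 2).
  set (N1 := (cos a1 * sin a2 * sin a3) ^ 2 + (- (sin a1 * cos a2 * cos a3)) ^ 2).
  set (N2 := (sin a1 * cos a2 * sin a3) ^ 2 + (- (cos a1 * sin a2 * cos a3)) ^ 2).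
  set (N3 := (sin a1 * sin a2 * cos a3) ^ 2 + (- (cos a1 * cos a2 * sin a3)) ^ 2).
  assert (E01 : N0 - N1 = ((cos a1 - sin a1) * (cos a1 + sin a1)) *
     ((cos a2 * cos a3 - sin a2 * sin a3) * (cos a2 * cos a3 + sin a2 * sin a3)))
    by (unfold N0, N1; ring).
  assert (E12 : N1 - N2 = ((cos a3 - sin a3) * (cos a3 + sin a3)) *
     (sin (a1 - a2) * sin (a1 + a2)))
    by (rewrite sin_minus, sin_plus; unfold N1, N2; ring).
  assert (E23 : N2 - N3 = ((cos a1 - sin a1) * (cos a1 + sin a1)) *
     (sin (a2 - a3) * sin (a2 + a3)))
    by (rewrite sin_minus, sin_plus; unfold N2, N3; ring).
  assert (N0p : 0 <= N0) by (unfold N0; nra).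
  assert (N1p : 0 <= N1) by (unfold N1; nra).
  assert (N2p : 0 <= N2) by (unfold N2; nra).
  assert (N3p : 0 <= N3) by (unfold N3; nra).
  assert (A1 : 0 <= (cos a1 - sin a1) * (cos a1 + sin a1)) by nra.
  assert (A3 : 0 <= (cos a3 - sin a3) * (cos a3 + sin a3)) by nra.
  assert (B1 : sin a2 * cos a3 <= cos a2 * cos a3) by nra.
  assert (B2 : sin a2 * sin a3 <= sin a2 * cos a3) by nra.
  assert (B3 : 0 < cos a2 * cos a3) by nra.
  assert (B4 : 0 <= sin a2 * sin a3) by nra.
  assert (A2 : 0 <= (cos a2 * cos a3 - sin a2 * sin a3) * (cos a2 * cos a3 + sin a2 * sin a3)) by nra.
  assert (A4 : 0 <= sin (a1 - a2) * sin (a1 + a2)) by nra.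
  assert (A5 : 0 <= sin (a2 - a3) * sin (a2 + a3)) by nra.
  assert (cs1 : cos a1 - sin a1 = 0 -> a1 = PI/4) by (intro; apply e1; lra).
  split; [apply sqrt_le_1_alt; nra|].
  split; [apply sqrt_le_1_alt; nra|].
  split; [apply sqrt_le_1_alt; nra|].
  split; [apply sqrt_pos|].
  split.
  { split.
    - intro E. apply sqrt_inj in E; try lra.
      assert (Z : ((cos a1 - sin a1) * (cos a1 + sin a1)) *
        ((cos a2 * cos a3 - sin a2 * sin a3) * (cos a2 * cos a3 + sin a2 * sin a3)) = 0) by lra.
      apply Rmult_integral in Z. destruct Z as [Z|Z].
      + apply Rmult_integral in Z. destruct Z as [Z|Z]; [apply cs1; lra| lra].
      + apply Rmult_integral in Z. destruct Z as [Z|Z]; [|lra].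
        assert (sin a2 = cos a2) by nra. assert (a2 = PI/4) by (apply e2; lra). lra.
    - intro E. subst a1. rewrite sin_PI4, cos_PI4 in *.
      apply sqrt_eq_lemma. nra. }
  split.
  { split.
    - intro E. apply sqrt_inj in E; try lra.
      assert (Z : ((cos a3 - sin a3) * (cos a3 + sin a3)) *
        (sin (a1 - a2) * sin (a1 + a2)) = 0) by lra.
      apply Rmult_integral in Z. destruct Z as [Z|Z].
      + apply Rmult_integral in Z. destruct Z as [Z|Z]; [|lra].
        assert (a3 = PI/4) by (apply e3; lra). lra.
      + apply Rmult_integral in Z. destruct Z as [Z|Z].
        * apply sin_zero in Z; lra.
        * apply sin_zero in Z; lra.
    - intro E. subst a2. apply sqrt_eq_lemma.
      replace (a1 - a1) with 0 in E12 by ring. rewrite sin_0 in E12. nra. }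
  split.
  { split.
    - intro E. apply sqrt_inj in E; try lra.
      assert (Z : ((cos a1 - sin a1) * (cos a1 + sin a1)) *
        (sin (a2 - a3) * sin (a2 + a3)) = 0) by lra.
      apply Rmult_integral in Z. destruct Z as [Z|Z].
      + apply Rmult_integral in Z. destruct Z as [Z|Z]; [left; apply cs1; lra|lra].
      + apply Rmult_integral in Z. destruct Z as [Z|Z].
        * apply sin_zero in Z; lra.
        * apply sin_zero in Z; lra.
    - intros [E|E].
      + subst a1. apply sqrt_eq_lemma. rewrite sin_PI4, cos_PI4 in E23. nra.
      + subst a3. apply sqrt_eq_lemma.
        replace (a2 - a2) with 0 in E23 by ring. rewrite sin_0 in E23. nra. }
  { split.
    - intro E. apply sqrt_eq_0 in E; [|lra]. unfold N3 in E.
      assert (Z1 : sin a1 * sin a2 * cos a3 = 0) by nra.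
      assert (Z2 : cos a1 * cos a2 * sin a3 = 0) by nra.
      assert (Z3 : sin a3 = 0).
      { apply Rmult_integral in Z2. destruct Z2 as [Z|Z]; [|exact Z]. nra. }
      apply sin_zero in Z3; try lra.
      apply Rmult_integral in Z1. destruct Z1 as [Z|Z]; [|lra].
      apply Rmult_integral in Z. destruct Z as [Z|Z].
      + apply sin_zero in Z; lra.
      + apply sin_zero in Z; lra.
    - intros [E F]. subst a2 a3. unfold N3.
      rewrite sin_0. match goal with |- sqrt ?e = 0 => replace e with 0 by ring end. apply sqrt_0. }
Qed.
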